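(* Let $G$ be a simple connected graph with $N\ge 2$ nodes. Then $\gamma(G)=1$ if and only if $G$ is a path (linear graph).
   Context: All graphs are simple, undirected and connected. $h_{ij}$ is the shortest-path distance. For an ordered landmark set $\mathcal{M}=\{A_1,\dots,A_m\}\subseteq\mathcal{V}$, $\mathbf{P}_{\mathcal{M}}(i)=\langle h_{iA_1},\dots,h_{iA_m}\rangle$ and $\mathbf{P}_{\mathcal{M}}$ is the matrix with these rows. $\mathcal{M}$ is a construction set of $G$ if $G$ is the unique simple connected graph on $\mathcal{V}$ whose distance vector matrix for landmarks $\mathcal{M}$ equals $\mathbf{P}_{\mathcal{M}}$. The link dimension $\gamma(G)$ is the minimum cardinality of a construction set. *)

(* Defs.v *)
From mathcomp Require Import all_boot.
Set Implicit Arguments. Unset Strict Implicit. Unset Printing Implicit Defensive.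

Section Graphs.
Variable T : finType.

Definition simple_graph (e : rel T) : Prop :=
  symmetric e /\ irreflexive e.

Definition connected_graph (e : rel T) : Prop :=
  forall x y : T, connect e x y.

Definition simple_connected (e : rel T) : Prop :=
  simple_graph e /\ connected_graph e.

Fixpoint walk (e : rel T) (k : nat) (x y : T) : bool :=
  if k is k'.+1 then [exists z, e x z && walk e k' z y] else x == y.

(* Shortest-path distance h_xy: least k with a walk of length k from x to y
   (for a connected graph such k exists and is < #|T|). *)
Definition dist (e : rel T) (x y : T) : nat :=
  find (fun k => walk e k x y) (iota 0 #|T|).

Definition dist_vector (e : rel T) (M : seq T) (i : T) : seq nat :=
  [seq dist e i A | A <- M].

Definition construction_set (e : rel T) (M : seq T) : Prop :=
  uniq M /\ (0 < size M) /\
  forall e' : rel T, simple_connected e' ->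
    (forall i : T, dist_vector e' M i = dist_vector e M i) -> e' =2 e.

Definition is_link_dim (e : rel T) (k : nat) : Prop :=
  (exists M, construction_set e M /\ size M = k) /\
  (forall M, construction_set e M -> k <= size M).

Definition is_path_graph (e : rel T) : Prop :=
  exists s : seq T, perm_eq s (enum T) /\
    forall x y : T, e x y <->
      exists i, i.+1 < size s /\
        ((nth x s i = x /\ nth x s i.+1 = y) \/ (nth x s i = y /\ nth x s i.+1 = x)).

End Graphs.

(* Main.v *)
Require Import Defs.
From mathcomp Require Import all_boot zify.
Set Implicit Arguments. Unset Strict Implicit.

Section L.
Variable T : finType.
Implicit Types (e : rel T) (x y A : T).

Lemma walk_connect e k x y : walk e k x y -> connect e x y.
Proof.
elim: k x => [|k IH] x /=; first by move/eqP->.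
case/existsP=> z /andP[exz wz]; apply: connect_trans (connect1 exz) (IH _ wz).
Qed.

Lemma walkS e k x z y : e x z -> walk e k z y -> walk e k.+1 x y.
Proof. by move=> h1 h2; apply/existsP; exists z; apply/andP. Qed.

Lemma path_walk e x p : path e x p -> walk e (size p) x (last x p).
Proof.
elim: p x => [|z p IH] x /=; first by [].
by case/andP=> h1 h2; apply: walkS h1 (IH _ h2).
Qed.

Lemma connect_walk e x y : connect e x y -> exists2 k, k < #|T| & walk e k x y.
Proof.
case/connectP=> p pth ->.
case: (shortenP pth) => p' pth' u _.
exists (size p'); last exact: path_walk.
have := max_card (mem (x :: p')); rewrite (card_uniqP u); exact.
Qed.

Lemma dist_has e x y : connect e x y -> has (fun k => walk e k x y) (iota 0 #|T|).
Proof.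
case/connect_walk=> k lk wk; apply/hasP; exists k => //.
by rewrite mem_iota.
Qed.

Lemma dist_lt e x y : connect e x y -> dist e x y < #|T|.
Proof. by move/dist_has; rewrite has_find size_iota. Qed.

Lemma dist_walk e x y : connect e x y -> walk e (dist e x y) x y.
Proof.
move=> c; have := nth_find 0 (dist_has c).
by rewrite nth_iota ?add0n //; exact: dist_lt.
Qed.

Lemma dist_min e k x y : connect e x y -> walk e k x y -> dist e x y <= k.
Proof.
move=> c w; case: (ltnP k #|T|) => hk; last by apply: leq_trans (ltnW (dist_lt c)) hk.
rewrite leqNgt; apply/negP => lt.
have := before_find 0 lt; rewrite nth_iota // add0n => h.
by rewrite /= h in w.
Qed.

Section Conn.
Variables (e : rel T) (A : T).
Hypothesis ce : connected_graph e.
Let d x := dist e x A.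

Lemma d_A : d A = 0.
Proof. have := dist_min (ce A A) (k:=0) (eqxx A). rewrite /d. lia. Qed.

Lemma d_step x y : e x y -> d x <= d y + 1.
Proof.
move=> exy; rewrite addn1; apply: dist_min (ce _ _) _.
exact: walkS exy (dist_walk (ce y A)).
Qed.

Lemma d_desc x : 0 < d x -> exists z, e x z /\ d z + 1 = d x.
Proof.
move=> p; have w := dist_walk (ce x A); rewrite -/(d x) in w.
move: p w; case E: (d x) => [|k] // _ /existsP[z /andP[exz wz]].
exists z; split => //.
have := dist_min (ce z A) wz; have := d_step exz; rewrite /d in E *. lia.
Qed.

Lemma d_zero x : d x = 0 -> x = A.
Proof. move=> h; have := dist_walk (ce x A); rewrite /d in h; rewrite h /=; by move/eqP. Qed.
End Conn.

Section Char.
Variables (e : rel T) (A : T) (f : T -> nat).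
Hypothesis fA : f A = 0.
Hypothesis f0 : forall x, f x = 0 -> x = A.
Hypothesis fstep : forall x y, e x y -> f x <= f y + 1.
Hypothesis fdesc : forall x, 0 < f x -> exists z, e x z /\ f z + 1 = f x.

Lemma f_walk_lb k x : walk e k x A -> f x <= k.
Proof.
elim: k x => [|k IH] x /=; first by move/eqP->; rewrite fA.
case/existsP=> z /andP[exz wz]; have := IH _ wz; have := fstep exz. lia.
Qed.

Lemma f_walk n x : f x = n -> walk e n x A.
Proof.
elim: n x => [|n IH] x hx /=; first by rewrite (f0 hx).
have [|z [exz fz]] := fdesc (x:=x); first lia.
apply: walkS exz (IH _ _); lia.
Qed.

Lemma f_conn : symmetric e -> connected_graph e.
Proof.
move=> se x y; apply: connect_trans (walk_connect (f_walk (erefl (f x)))) _.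
rewrite (sym_connect_sym se); exact: walk_connect (f_walk (erefl (f y))).
Qed.

Lemma dist_char : connected_graph e -> forall x, dist e x A = f x.
Proof.
move=> ce x; apply/eqP; rewrite eqn_leq.
rewrite (dist_min (ce x A) (f_walk (erefl _))).
exact: f_walk_lb (dist_walk (ce x A)).
Qed.
End Char.
End L.

Lemma char_all (T : finType) (r : rel T) (A : T) (f : T -> nat) :
  symmetric r -> irreflexive r -> f A = 0 -> (forall x, f x = 0 -> x = A) ->
  (forall x y, r x y -> f x <= f y + 1) ->
  (forall x, 0 < f x -> exists z, r x z /\ f z + 1 = f x) ->
  simple_connected r /\ forall x, dist r x A = f x.
Proof.
move=> sr ir fA f0 fs fd.
have cr : connected_graph r by apply: (f_conn fA f0 fd).
split; first by split.
exact: (dist_char fA f0 fs fd).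
Qed.

Lemma forward (T : finType) (e : rel T) (A : T) :
  simple_connected e ->
  (forall e' : rel T, simple_connected e' ->
    (forall i : T, dist_vector e' [:: A] i = dist_vector e [:: A] i) -> e' =2 e) ->
  is_path_graph e.
Proof.
move=> [[se ie] ce] cM.
pose d x := dist e x A.
have dA : d A = 0 := d_A A ce.
have d0 : forall x, d x = 0 -> x = A := d_zero (A:=A) ce.
have dst : forall x y, e x y -> d x <= d y + 1 := d_step A ce.
have dds : forall x, 0 < d x -> exists z, e x z /\ d z + 1 = d x := d_desc (A:=A) ce.
pose e2 := [rel x y | (d x == (d y).+1) || (d y == (d x).+1)].
pose e3 := [rel x y | (x != y) && (d x <= (d y).+1) && (d y <= (d x).+1)].
have [c2 D2] : simple_connected e2 /\ forall x, dist e2 x A = d x.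
  apply: char_all => //.
  - by move=> x y /=; rewrite orbC.
  - by move=> x /=; rewrite orbb; apply/negbTE/eqP; lia.
  - by move=> x y /= /orP[] /eqP ->; lia.
  - move=> x /dds [z [_ hz]]; exists z; split => //=; apply/orP; left; apply/eqP; lia.
have [c3 D3] : simple_connected e3 /\ forall x, dist e3 x A = d x.
  apply: char_all => //.
  - by move=> x y /=; rewrite eq_sym andbAC.
  - by move=> x /=; rewrite eqxx.
  - by move=> x y /= /andP[/andP[_ h1] h2]; lia.
  - move=> x /dds [z [_ hz]]; exists z; split => //=.
    apply/andP; split; [apply/andP; split|]; last lia; last lia.
    by apply/eqP=> exz; move: hz; rewrite exz; lia.
have E2 : e2 =2 e by apply: cM => // i; rewrite /dist_vector /= D2.
have E3 : e3 =2 e by apply: cM => // i; rewrite /dist_vector /= D3.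
have dinj : injective d.
  move=> x y dxy; apply/eqP; apply/negP => /negP nxy.
  have := E3 x y; rewrite -E2 /= nxy dxy leqnSn /=.
  by rewrite orbb => /esym/eqP; lia.
pose N := #|T|.
have dlt : forall x, d x < N by move=> x; exact: dist_lt (ce x A).
have surj : forall i, i < N -> exists x, d x = i.
  move=> i iN.
  have U : uniq [seq d x | x <- enum T] by rewrite (map_inj_uniq dinj) enum_uniq.
  have Sb : {subset [seq d x | x <- enum T] <= iota 0 N}.
    by move=> k /mapP[x _ ->]; rewrite mem_iota /= dlt.
  have Sz : size (iota 0 N) <= size [seq d x | x <- enum T].
    by rewrite size_map size_iota -cardE.
  have [_ h] := uniq_min_size U Sb Sz.
  have : i \in [seq d x | x <- enum T] by rewrite h mem_iota.
  by case/mapP=> x _ ->; exists x.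
pose g i := odflt A [pick x | d x == i].
have gd : forall i, i < N -> d (g i) = i.
  move=> i /surj [x dx]; rewrite /g; case: pickP => [y /eqP //|/(_ x)].
  by rewrite dx eqxx.
pose s := [seq g i | i <- iota 0 N].
have ss : size s = N by rewrite size_map size_iota.
have ns : forall x i, i < N -> nth x s i = g i.
  by move=> x i iN; rewrite (nth_map 0) ?nth_iota ?size_iota.
have gdx : forall x, g (d x) = x by move=> x; apply: dinj; rewrite gd.
exists s; split.
  apply: uniq_perm; last first.
  - move=> x; rewrite mem_enum; apply/mapP; exists (d x); last by rewrite gdx.
    by rewrite mem_iota /= dlt.
  - exact: (enum_uniq (mem T)).
  rewrite map_inj_in_uniq ?iota_uniq //.
  move=> i j; rewrite !mem_iota /= => iN jN gij.
  by rewrite -(gd _ iN) -(gd _ jN) gij.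
move=> x y; rewrite ss -E2 /=; split.
  case/orP=> /eqP h.
  - exists (d y); split; first by rewrite -h dlt.
    by right; rewrite -h !ns ?dlt // !gdx.
  - exists (d x); split; first by rewrite -h dlt.
    by left; rewrite -h !ns ?dlt // !gdx.
case=> i [iN [[hx hy]|[hx hy]]];
  rewrite !ns ?(ltnW iN) // in hx hy; rewrite -hx -hy !gd ?(ltnW iN) //.
- by rewrite eqxx orbT.
- by rewrite eqxx.
Qed.

Lemma backward (T : finType) (e : rel T) (s : seq T) :
  simple_connected e -> 2 <= #|T| -> perm_eq s (enum T) ->
  (forall x y : T, e x y <->
      exists i, i.+1 < size s /\
        ((nth x s i = x /\ nth x s i.+1 = y) \/ (nth x s i = y /\ nth x s i.+1 = x))) ->
  exists A, construction_set e [:: A].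
Proof.
move=> [[se ie] ce] h2 ps hs.
have us : uniq s by rewrite (perm_uniq ps) enum_uniq.
have ss : size s = #|T| by rewrite (perm_size ps) -cardE.
have ins : forall x, x \in s by move=> x; rewrite (perm_mem ps) mem_enum.
pose A := nth (enum_default (Ordinal (ltnW h2))) s 0.
pose f x := index x s.
have fl : forall x, f x < size s by move=> x; rewrite index_mem.
have nf : forall z x, nth z s (f x) = x by move=> z x; rewrite nth_index.
have fn : forall z i, i < size s -> f (nth z s i) = i by move=> z i hi; rewrite /f index_uniq.
have finj : forall x y, f x = f y -> x = y.
  by move=> x y h; rewrite -(nf x x) h nf.
have fA : f A = 0 by rewrite /A fn // ss; lia.
have f0 : forall x, f x = 0 -> x = A by move=> x h; rewrite -(nf A x) h /A; apply: set_nth_default; rewrite ss; lia.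
have edge : forall x y, e x y -> (f y = (f x).+1 \/ f x = (f y).+1).
  move=> x y /hs [i [iN [[hx hy]|[hx hy]]]].
  - left; rewrite -hx -hy !fn //; lia.
  - right; rewrite -hx -hy !fn //; lia.
have fstep : forall x y, e x y -> f x <= f y + 1 by move=> x y /edge; lia.
have fdesc : forall x, 0 < f x -> exists z, e x z /\ f z + 1 = f x.
  move=> x px; exists (nth A s (f x).-1); split; last by rewrite fn; [lia | have := fl x; lia].
  apply/hs; exists (f x).-1; split; first by have := fl x; lia.
  right; rewrite prednK // nf; split => //; apply: set_nth_default; have := fl x; lia.
have [_ Df] := char_all se ie fA f0 fstep fdesc.
exists A; split => //; split => //.
move=> e' [[se' ie'] ce'] hd.
have D' : forall x, dist e' x A = f x.
  by move=> x; have := hd x; rewrite /dist_vector /= Df; case.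
have st' : forall x y, e' x y -> f x <= f y + 1.
  by move=> x y h; have := d_step A ce' h; rewrite /= !D'.
have ds' : forall x, 0 < f x -> exists z, e' x z /\ f z + 1 = f x.
  by move=> x; rewrite -!D' => h; have [z [h1 h2']] := d_desc ce' h; exists z; rewrite -!D'.
move=> x y; apply/idP/idP.
- move=> h; have nxy : x != y by apply/eqP=> exy; rewrite exy ie' in h.
  have nf' : f x != f y by apply/eqP=> /finj; apply/eqP.
  have h1 := st' _ _ h; rewrite se' in h; have h2' := st' _ _ h.
  apply/hs; case: (ltnP (f x) (f y)) => c.
  + exists (f x); split; first by have := fl y; lia.
    left; split; first exact: nf.
    by have -> : (f x).+1 = f y by lia.
  + exists (f y); split; first by have := fl x; lia.
    right; split; first exact: nf.
    by have -> : (f y).+1 = f x by lia.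
- move=> h; have := h; case/hs=> i [iN [[hx hy]|[hx hy]]].
  + have fy : f y = i.+1 by rewrite -hy fn.
    have [|z [ez fz]] := ds' y; first lia.
    have -> : x = z by apply: finj; have := fn x i (ltnW iN); rewrite hx; lia.
    by rewrite se'.
  + have fx : f x = i.+1 by rewrite -hy fn.
    have [|z [ez fz]] := ds' x; first lia.
    have -> : y = z by apply: finj; have := fn x i (ltnW iN); rewrite hx; lia.
    by [].
Qed.

Theorem proposition1 (T : finType) (e : rel T) :
  simple_connected e -> 2 <= #|T| ->
  (is_link_dim e 1 <-> is_path_graph e).
Proof.
move=> sc h2; split.
- case=> [[M [[uM [pM cM]] sM]] _].
  case: M uM pM cM sM => [|A [|? ?]] //= _ _ cM _.
  exact: forward sc cM.
- case=> s [ps hs].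
  have [A cA] := backward sc h2 ps hs.
  split; first by exists [:: A].
  by move=> M [_ [pM _]].
Qed.
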